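(* Let $M$ be a free $\mathbb{T}$-module with a finite $\mathbb{T}$-basis, $V$ its associated complex vector space, and $(\cdot,\cdot)$ a bicomplex scalar product on $M$ which is hyperbolic positive and closed on $V$. Then $V$ is a closed subset of the metric space $(M,d)$, where $d(\widehat X,\widehat Y)=\|\widehat X-\widehat Y\|$.
   Context: Bicomplex numbers: $\mathbb{T}=\{z_1+z_2\mathbf{i_2}: z_1,z_2\in\mathbb{C}(\mathbf{i_1})\}$, $\mathbb{C}(\mathbf{i_1})=\{x+y\mathbf{i_1}: x,y\in\mathbb{R}\}$, $\mathbf{i_1}^2=\mathbf{i_2}^2=-1$, $\mathbf{i_1}\mathbf{i_2}=\mathbf{i_2}\mathbf{i_1}=\mathbf{j}$, $\mathbf{j}^2=1$ (commutative). Hyperbolic numbers $\mathbb{D}=\{x+y\mathbf{j}:x,y\in\mathbb{R}\}$. Idempotents $\mathbf{e_1}=(1+\mathbf{j})/2$, $\mathbf{e_2}=(1-\mathbf{j})/2$. Conjugation: $(z_1+z_2\mathbf{i_2})^{\dagger_3}=\overline{z_1}-\overline{z_2}\mathbf{i_2}$. $\mathbb{D}^+=\{a\mathbf{e_1}+b\mathbf{e_2}: a,b\ge 0\}$. $M$ has $\mathbb{T}$-basis $\{\widehat m_1,\dots,\widehat m_n\}$, $V=\{\sum x_l\widehat m_l: x_l\in\mathbb{C}(\mathbf{i_1})\}$; for $\widehat X=\sum x_l\widehat m_l$ with $x_l=x_{1l}\mathbf{e_1}+x_{2l}\mathbf{e_2}$, $x_{kl}\in\mathbb{C}(\mathbf{i_1})$,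 put $\widehat X_{\mathbf{e_k}}=\sum_l x_{kl}\widehat m_l\in V$. A bicomplex scalar product is a map $(\cdot,\cdot):M\times M\to\mathbb{T}$ with: $(\widehat X,\widehat Y_1+\widehat Y_2)=(\widehat X,\widehat Y_1)+(\widehat X,\widehat Y_2)$; $(\widehat X,\alpha\widehat Y)=\alpha(\widehat X,\widehat Y)$ for $\alpha\in\mathbb{T}$; $(\widehat X,\widehat Y)=(\widehat Y,\widehat X)^{\dagger_3}$; $(\widehat X,\widehat X)=0\iff\widehat X=0$. Hyperbolic positive: $(\widehat X,\widehat X)\in\mathbb{D}^+$ for all $\widehat X$. Closed on $V$: $(\widehat X,\widehat Y)\in\mathbb{C}(\mathbf{i_1})$ for $\widehat X,\widehat Y\in V$. For $\widehat Z\in V$, $\|\widehat Z\|=(\widehat Z,\widehat Z)^{1/2}$; for $\widehat X\in M$, $\|\widehat X\|:=\big((\|\widehat X_{\mathbf{e_1}}\|^2+\|\widehat X_{\mathbf{e_2}}\|^2)/2\big)^{1/2}$; $d$ is a metric on $M$. *)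

(* Defs.v *)
From HB Require Import structures.
From mathcomp Require Import all_boot all_order all_algebra.
From mathcomp Require Import complex.
From mathcomp Require Import reals.
Set Implicit Arguments. Unset Strict Implicit. Unset Printing Implicit Defensive.
Import Order.TTheory GRing.Theory Num.Theory.
Local Open Scope ring_scope.

(* Bicomplex numbers: z1 + z2 i2 with z1, z2 in C(i1) = R[i]
   (the imaginary unit 'i of R[i] plays the role of i1). *)
Record bicomplex (R : realType) := BC { bc1 : R[i]; bc2 : R[i] }.

Section Bicomplex.
Variable R : realType.
Local Notation T := (bicomplex R).

Definition bc0 : T := BC 0 0.
Definition bcadd (x y : T) : T := BC (bc1 x + bc1 y) (bc2 x + bc2 y).
Definition bcopp (x : T) : T := BC (- bc1 x) (- bc2 x).
(* (z1 + z2 i2)(w1 + w2 i2) = (z1 w1 - z2 w2) + (z1 w2 + z2 w1) i2 *)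
Definition bcmul (x y : T) : T :=
  BC (bc1 x * bc1 y - bc2 x * bc2 y) (bc1 x * bc2 y + bc2 x * bc1 y).
Definition bcconj3 (x : T) : T := BC ((bc1 x)^*)%C (- (bc2 x)^*)%C.

(* idempotent components: x = (z1 - i1 z2) e1 + (z1 + i1 z2) e2 *)
Definition bcP1 (x : T) : R[i] := bc1 x - 'i * bc2 x.
Definition bcP2 (x : T) : R[i] := bc1 x + 'i * bc2 x.

(* D^+ = { a e1 + b e2 : a, b real, a, b >= 0 }; in R[i], 0 <= z means
   z is real and nonnegative. *)
Definition in_Dplus (x : T) : Prop := 0 <= bcP1 x /\ 0 <= bcP2 x.

Definition in_Ci1 (x : T) : Prop := bc2 x = 0.
End Bicomplex.

(* The free T-module M with T-basis {m_1,...,m_n} is represented by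
   coordinate vectors w.r.t. that basis: X = sum_l x_l m_l  <->  (x_l)_l. *)
Definition bcmod (R : realType) (n : nat) := 'I_n -> bicomplex R.

Section Module.
Variables (R : realType) (n : nat).
Local Notation M := (bcmod R n).

Definition madd (X Y : M) : M := fun l => bcadd (X l) (Y l).
Definition mopp (X : M) : M := fun l => bcopp (X l).
Definition msub (X Y : M) : M := madd X (mopp Y).
Definition mscale (a : bicomplex R) (X : M) : M := fun l => bcmul a (X l).
Definition mzero : M := fun _ => bc0 R.

Definition inV (X : M) : Prop := forall l, in_Ci1 (X l).

(* X_{e_k} = sum_l x_{kl} m_l, an element of V *)
Definition comp_e1 (X : M) : M := fun l => BC (bcP1 (X l)) 0.
Definition comp_e2 (X : M) : M := fun l => BC (bcP2 (X l)) 0.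

Definition bicomplex_scalar_product (sp : M -> M -> bicomplex R) : Prop :=
  [/\ (forall X Y1 Y2, sp X (madd Y1 Y2) = bcadd (sp X Y1) (sp X Y2)),
      (forall X Y a, sp X (mscale a Y) = bcmul a (sp X Y)),
      (forall X Y, sp X Y = bcconj3 (sp Y X)) &
      (forall X, sp X X = bc0 R <-> X = mzero)].

Definition hyperbolic_positive (sp : M -> M -> bicomplex R) : Prop :=
  forall X, in_Dplus (sp X X).

Definition closed_on_V (sp : M -> M -> bicomplex R) : Prop :=
  forall X Y, inV X -> inV Y -> in_Ci1 (sp X Y).

(* For Z in V, ||Z|| = (Z,Z)^(1/2); under the hypotheses (Z,Z) is a
   nonnegative real number, namely the real part of its C(i1)-part. *)
Definition normV (sp : M -> M -> bicomplex R) (Z : M) : R :=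
  Num.sqrt (complex.Re (bc1 (sp Z Z))).

Definition normM (sp : M -> M -> bicomplex R) (X : M) : R :=
  Num.sqrt ((normV sp (comp_e1 X) ^+ 2 + normV sp (comp_e2 X) ^+ 2) / 2).

Definition distM (sp : M -> M -> bicomplex R) (X Y : M) : R :=
  normM sp (msub X Y).

Definition metric_closed (d : M -> M -> R) (S : M -> Prop) : Prop :=
  forall X, ~ S X -> exists eps : R, 0 < eps /\ forall Y, d X Y < eps -> ~ S Y.
End Module.

(* Main.v *)
Require Import Defs.
From mathcomp Require Import all_boot all_order all_algebra.
From mathcomp Require Import complex reals.
From mathcomp Require Import ring lra.
From Stdlib Require Import FunctionalExtensionality.
Import Order.TTheory GRing.Theory Num.Theory.
Local Open Scope ring_scope.

Section Proof.
Variables (R : realType) (n : nat) (sp : bcmod R n -> bcmod R n -> bicomplex R).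
Hypothesis Hsp : bicomplex_scalar_product sp.
Hypothesis Hpos : hyperbolic_positive sp.
Hypothesis Hcl : closed_on_V sp.

Definition rr (u : bicomplex R) : R := complex.Re (bc1 u).
Definition Q (Z : bcmod R n) : R := rr (sp Z Z).

Lemma rr_add u v : rr (bcadd u v) = rr u + rr v.
Proof. by case: u v => [[a b] c] [[d e] f]. Qed.

Lemma rr_opp u : rr (bcopp u) = - rr u.
Proof. by case: u => [[a b] c]. Qed.

Lemma rr_conj u : rr (bcconj3 u) = rr u.
Proof. by case: u => [[a b] c]. Qed.

Lemma rsym X Y : rr (sp X Y) = rr (sp Y X).
Proof. case: Hsp => _ _ H _. by rewrite H rr_conj. Qed.

Lemma rD X Y1 Y2 : rr (sp X (madd Y1 Y2)) = rr (sp X Y1) + rr (sp X Y2).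
Proof. case: Hsp => H _ _ _. by rewrite H rr_add. Qed.

Lemma mopp_scale (Y : bcmod R n) : mopp Y = mscale (BC (-1) 0) Y.
Proof.
apply: functional_extensionality => l.
rewrite /mopp /mscale /bcopp /bcmul /=.
by congr BC; ring.
Qed.

Lemma rN X Y : rr (sp X (mopp Y)) = - rr (sp X Y).
Proof.
case: Hsp => _ H _ _. rewrite mopp_scale H.
case: (sp X Y) => a b. rewrite /rr /bcmul /=.
by rewrite mulN1r mul0r subr0; case: a.
Qed.

Lemma parallelogram a b :
  Q (madd a b) + Q (msub a b) = 2 * Q a + 2 * Q b.
Proof.
have e1 : rr (sp (madd a b) (madd a b)) =
  rr (sp a a) + rr (sp a b) + rr (sp b a) + rr (sp b b).
  by rewrite rD (rsym _ a) (rsym _ b) !rD; lra.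
have e2 : rr (sp (msub a b) (msub a b)) =
  rr (sp a a) - rr (sp a b) - rr (sp b a) + rr (sp b b).
  rewrite /msub rD rN (rsym _ a) (rsym _ b) !rD !rN.
  lra.
rewrite /Q e1 e2 (rsym b a); lra.
Qed.

Lemma Q_ge0 Z : 0 <= Q Z /\ (Q Z = 0 -> bc1 (sp Z Z) = 0).
Proof.
have [H1 H2] := Hpos Z.
rewrite /Q /rr.
move: H1 H2; rewrite /bcP1 /bcP2.
case: (sp Z Z) => [[a b] [c d]] /=.
rewrite !lecE /= => /andP [/eqP h1 h2] /andP [/eqP h3 h4].
split; first lra.
move=> ha; rewrite ha.
have hb : b = 0 by lra.
by rewrite hb.
Qed.

Lemma Q_def Z : inV Z -> Q Z = 0 -> Z = @mzero R n.
Proof.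
move=> hZ h0.
case: Hsp => _ _ _ H. apply/H.
have [_ h1] := Q_ge0 Z.
have h2 := Hcl Z Z hZ hZ.
move: (h1 h0) h2; rewrite /in_Ci1.
by case: (sp Z Z) => a b /= -> ->.
Qed.

Definition Dv (X : bcmod R n) := msub (comp_e1 X) (comp_e2 X).

Lemma Dv_in X : inV (Dv X).
Proof. by move=> l; rewrite /in_Ci1 /= oppr0 addr0. Qed.

Lemma Dv_zero X : Dv X = @mzero R n -> inV X.
Proof.
move=> h l; rewrite /in_Ci1.
have := congr1 (fun f => bc1 (f l)) h.
rewrite /= /bcP1 /bcP2 => h1.
have h2 : 2 * bc2 (X l) = 0.
  transitivity ((bc1 (X l) - 'i * bc2 (X l) + - (bc1 (X l) + 'i * bc2 (X l))) * 'i).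
    transitivity (-2 * ('i ^+ 2) * bc2 (X l)); first by rewrite sqr_i; ring.
    ring.
  by rewrite h1 mul0r.
move/eqP: h2; rewrite mulf_eq0 => /orP [|/eqP //].
by rewrite pnatr_eq0.
Qed.

Lemma Dv_sub X Y : inV Y -> Dv (msub X Y) = Dv X.
Proof.
move=> hY; apply: functional_extensionality => l.
have hy := hY l; rewrite /in_Ci1 in hy.
rewrite /Dv /msub /madd /mopp /comp_e1 /comp_e2 /bcadd /bcopp /bcP1 /bcP2 /= hy.
congr BC; ring.
Qed.

End Proof.

Theorem mainTheorem14 (R : realType) (n : nat)
    (sp : bcmod R n -> bcmod R n -> bicomplex R) :
  bicomplex_scalar_product sp ->
  hyperbolic_positive sp ->
  closed_on_V sp ->
  metric_closed (distM sp) (@inV R n).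
Proof.
move=> Hsp Hpos Hcl X nX.
set D := @Dv R n X.
have DV : inV D by apply: (@Dv_in R n).
have [qge _] := @Q_ge0 R n sp Hpos D.
have qnz : Q R n sp D != 0.
  apply/eqP => h0; apply: nX; apply: (@Dv_zero R n).
  exact: (@Q_def R n sp Hsp Hpos Hcl D DV h0).
have qgt : 0 < Q R n sp D by rewrite lt_def qnz qge.
exists (Num.sqrt (Q R n sp D) / 2); split.
  by rewrite divr_gt0 ?sqrtr_gt0.
move=> Y hd hY.
set W := msub X Y.
have hDW : msub (comp_e1 W) (comp_e2 W) = D by apply: (@Dv_sub R n).
have par := @parallelogram R n sp Hsp (comp_e1 W) (comp_e2 W).
rewrite hDW in par.
have [Qa _] := @Q_ge0 R n sp Hpos (comp_e1 W).
have [Qb _] := @Q_ge0 R n sp Hpos (comp_e2 W).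
have [Qab _] := @Q_ge0 R n sp Hpos (madd (comp_e1 W) (comp_e2 W)).
move: hd.
change (Num.sqrt ((Num.sqrt (Q R n sp (comp_e1 W)) ^+ 2 + Num.sqrt (Q R n sp (comp_e2 W)) ^+ 2) / 2)
  < Num.sqrt (Q R n sp D) / 2 -> False).
rewrite !sqr_sqrtr //.
set s := (_ + _) / 2.
have s0 : 0 <= s by rewrite divr_ge0 // addr_ge0.
have := sqrtr_ge0 s; have := sqr_sqrtr s0; have := sqr_sqrtr qge.
have := sqrtr_ge0 (Q R n sp D).
rewrite /s in s0 *.
move: (Num.sqrt _) (Num.sqrt _) => u v.
nra.
Qed.
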